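(* For every even integer $n=2k>0$, the root scheme $$\big([(q,2),(p,2)]^{k},(q,1),(r,1)^{2k+1},(p,1)\big)$$ is realizable by polynomials of degree $n+1$. For every odd integer $n=2k+1>0$, the root scheme $$\big([(q,2),(p,2)]^{k},(q,2),(p,1),(r,1)^{2k+2},(p,1)\big)$$ is realizable by polynomials of degree $n+1$.
   Context: A root scheme is a finite sequence $((l_1,m_1),\dots,(l_k,m_k))$ with $l_i\in\{p,q,r\}$ and $m_i$ a positive integer. It is realizable by polynomials of degree $d$ if there exist real polynomials $P,Q$ such that $f=P-Q$ has degree $d$ and, listing the real roots of $P$, $Q$ and $f$ in increasing order as $\rho_1<\dots<\rho_k$, each $\rho_i$ is a root of exactly one of $P,Q,f$, with $l_i=p$ (resp. $q$, $r$) if $\rho_i$ is a root of $P$ (resp. $Q$, $f$), and $m_i$ is the multiplicity of $\rho_i$ as such a root. A sequence $T$ repeated $u$ times is written $T^u$ (empty if $u=0$), and $[\dots]$ denotes grouping. *)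

(* Defs.v *)
(* real polynomials over an arbitrary realType R
   (every realType is a complete archimedean ordered field, i.e. the reals). *)
From mathcomp Require Import all_boot all_order all_algebra.
From mathcomp Require Import reals.
Set Implicit Arguments. Unset Strict Implicit. Unset Printing Implicit Defensive.
Import Order.TTheory GRing.Theory Num.Theory.
Local Open Scope ring_scope.

(* Labels of a root scheme: p (root of P), q (root of Q), r (root of f = P - Q). *)
Inductive lbl := Lp | Lq | Lr.

Definition scheme := seq (lbl * nat).

Definition root_entry (R : realType) (P Q : {poly R}) (x : R) (e : lbl * nat) : Prop :=
  let f := P - Q in
  match e.1 with
  | Lp => [/\ root P x, ~~ root Q x, ~~ root f x & mup x P = e.2]
  | Lq => [/\ ~~ root P x, root Q x, ~~ root f x & mup x Q = e.2]
  | Lr => [/\ ~~ root P x, ~~ root Q x, root f x & mup x f = e.2]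
  end.

Definition realizes (R : realType) (s : scheme) (d : nat) (P Q : {poly R}) : Prop :=
  size (P - Q) = d.+1 /\
  exists rho : seq R,
    [/\ sorted <%R rho,
        size rho = size s,
        (forall x : R, (root P x || root Q x || root (P - Q) x) <-> x \in rho)
      & forall i, (i < size s)%N -> root_entry P Q (nth 0 rho i) (nth (Lp, 0%N) s i)].

Definition realizable (R : realType) (s : scheme) (d : nat) : Prop :=
  exists P Q : {poly R}, realizes s d P Q.

Definition srep (T : scheme) (u : nat) : scheme := flatten (nseq u T).

Definition scheme_even (k : nat) : scheme :=
  srep [:: (Lq, 2%N); (Lp, 2%N)] k ++ [:: (Lq, 1%N)] ++ srep [:: (Lr, 1%N)] (2 * k + 1)
  ++ [:: (Lp, 1%N)].

Definition scheme_odd (k : nat) : scheme :=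
  srep [:: (Lq, 2%N); (Lp, 2%N)] k ++ [:: (Lq, 2%N); (Lp, 1%N)]
  ++ srep [:: (Lr, 1%N)] (2 * k + 2) ++ [:: (Lp, 1%N)].

(* Main.v *)
Require Import Defs.
From mathcomp Require Import all_boot all_order all_algebra.
From mathcomp Require Import reals.
From mathcomp Require Import polyrcf zify ring lra.
Set Implicit Arguments. Unset Strict Implicit. Unset Printing Implicit Defensive.
Import Order.TTheory GRing.Theory Num.Theory.
Local Open Scope ring_scope.

Section Bounds.
Variable R : realType.
Variable k : nat.

Definition u : R := 4 ^+ k.
Definition t : R := 6 * u ^+ 2.
Definition b : R := 6 * u * t ^+ (2 * k).
Definition a (i : nat) : R := t ^+ (2 * i + 1).
Definition c (i : nat) : R := t ^+ (2 * i + 2).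
Definition Av (x : R) := \prod_(i <- iota 0 k) (x + a i).
Definition Bv (x : R) := \prod_(i <- iota 0 k) (x + c i).

Lemma u_ge1 : 1 <= u.
Proof. by rewrite /u exprn_ege1 // ler1n. Qed.

Lemma u_gt0 : 0 < u.
Proof. by apply: lt_le_trans u_ge1. Qed.

Lemma t_gt1 : 1 < t.
Proof.
rewrite /t; have h := u_ge1.
have : 1 <= u ^+ 2 by rewrite exprn_ege1.
lra.
Qed.

Lemma t_gt0 : 0 < t.
Proof. by apply: lt_trans t_gt1. Qed.

Lemma c_eq i : c i = t * a i.
Proof. by rewrite /c /a -exprS; congr (t ^+ _); lia. Qed.

Lemma tX_ge1 n : 1 <= t ^+ n.
Proof. by rewrite exprn_ege1 // ltW // t_gt1. Qed.

Lemma tX_le m n : (m <= n)%N -> t ^+ m <= t ^+ n.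
Proof. by move=> mn; rewrite ler_eXn2l // t_gt1. Qed.

Lemma tX_lt m n : (m < n)%N -> t ^+ m < t ^+ n.
Proof. by move=> mn; rewrite ltr_eXn2l // t_gt1. Qed.

Lemma a_ge_t i : t <= a i.
Proof. by rewrite /a -{1}(expr1 t) tX_le //; lia. Qed.

Lemma a_gt0 i : 0 < a i.
Proof. by apply: lt_le_trans (a_ge_t i); apply: t_gt0. Qed.

Lemma a_le_c i : a i <= c i.
Proof. by rewrite /a /c tX_le //; lia. Qed.

Lemma c_gt0 i : 0 < c i.
Proof. exact: lt_le_trans (a_gt0 i) (a_le_c i). Qed.

Lemma prod_const_iota (x : R) m n : \prod_(i <- iota m n) x = x ^+ n.
Proof.
elim: n m => [|n IH] m; first by rewrite big_nil expr0.
by rewrite /= big_cons IH exprS.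
Qed.

Lemma Av_gt0 x : 0 <= x -> 0 < Av x.
Proof. by move=> x0; apply: prodr_gt0 => i _; have := a_gt0 i; lra. Qed.

Lemma Bv_gt0 x : 0 <= x -> 0 < Bv x.
Proof. by move=> x0; apply: prodr_gt0 => i _; have := c_gt0 i; lra. Qed.

Lemma iota_split j : (j <= k)%N -> iota 0 k = iota 0 j ++ iota j (k - j).
Proof. by move=> jk; rewrite -iotaD subnKC. Qed.

Lemma Lo j x : (j <= k)%N -> 0 < x -> x <= t ^+ (2 * j + 1) ->
  t ^+ (k - j) * Av x <= 2 ^+ (k - j) * Bv x.
Proof.
move=> jk x0 xle; rewrite /Av /Bv (iota_split jk) !big_cat /=.
have H1 : \prod_(i <- iota 0 j) (x + a i) <= \prod_(i <- iota 0 j) (x + c i).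
  apply: ler_prod => i _; apply/andP; split.
    by apply: addr_ge0; [apply: ltW | apply: ltW; apply: a_gt0].
  by rewrite lerD2l a_le_c.
have H2 : t ^+ (k - j) * \prod_(i <- iota j (k - j)) (x + a i)
    <= 2 ^+ (k - j) * \prod_(i <- iota j (k - j)) (x + c i).
  rewrite -(prod_const_iota t j (k - j)) -(prod_const_iota 2 j (k - j)) -!big_split /=.
  rewrite big_seq [X in _ <= X]big_seq.
  apply: ler_prod => i; rewrite mem_iota => /andP [ji _].
  have xa : x <= a i by apply: le_trans xle _; rewrite /a tX_le //; lia.
  have := t_gt0; have := a_gt0 i; rewrite c_eq => ha ht.
  apply/andP; split; first by apply: mulr_ge0; [apply: ltW | apply: addr_ge0; apply: ltW].
  nra.
have P1 : 0 <= \prod_(i <- iota 0 j) (x + a i).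
  by apply: prodr_ge0 => i _; apply: addr_ge0; apply: ltW => //; apply: a_gt0.
have P2 : 0 <= \prod_(i <- iota j (k - j)) (x + a i).
  by apply: prodr_ge0 => i _; apply: addr_ge0; apply: ltW => //; apply: a_gt0.
rewrite mulrCA [X in _ <= X]mulrCA; apply: ler_pM => //.
by apply: mulr_ge0 => //; apply: exprn_ge0; apply: ltW; apply: t_gt0.
Qed.

Lemma Up j x : (j <= k)%N -> t ^+ (2 * j) <= x ->
  Bv x <= 2 ^+ j * t ^+ (k - j) * Av x.
Proof.
move=> jk xge.
have x0 : 0 < x by apply: lt_le_trans xge; apply: exprn_gt0; apply: t_gt0.
rewrite /Av /Bv (iota_split jk) !big_cat /=.
have H1 : \prod_(i <- iota 0 j) (x + c i) <= 2 ^+ j * \prod_(i <- iota 0 j) (x + a i).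
  rewrite -(prod_const_iota 2 0 j) -big_split /= big_seq [X in _ <= X]big_seq.
  apply: ler_prod => i; rewrite mem_iota => /andP [_ ij].
  have xc : c i <= x by apply: le_trans xge; rewrite /c tX_le //; lia.
  have := a_gt0 i; have := c_gt0 i => hc ha.
  apply/andP; split; first by apply: addr_ge0; apply: ltW.
  lra.
have H2 : \prod_(i <- iota j (k - j)) (x + c i)
    <= t ^+ (k - j) * \prod_(i <- iota j (k - j)) (x + a i).
  rewrite -(prod_const_iota t j (k - j)) -big_split /= big_seq [X in _ <= X]big_seq.
  apply: ler_prod => i _.
  have := t_gt1; have := a_gt0 i; rewrite c_eq => ha ht.
  apply/andP; split; first by apply: addr_ge0; apply: ltW => //; apply: mulr_gt0 => //; lra.
  nra.
have P1 : 0 <= \prod_(i <- iota 0 j) (x + c i).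
  by apply: prodr_ge0 => i _; apply: addr_ge0; apply: ltW => //; apply: c_gt0.
have P2 : 0 <= \prod_(i <- iota j (k - j)) (x + c i).
  by apply: prodr_ge0 => i _; apply: addr_ge0; apply: ltW => //; apply: c_gt0.
rewrite -mulrACA.
by apply: ler_pM.
Qed.


Lemma four_le j : (j <= k)%N -> (2 : R) ^+ j ^+ 2 <= u.
Proof.
move=> jk; rewrite -exprM mulnC exprM (_ : (2 : R) ^+ 2 = 4); last by rewrite expr2; lra.
by rewrite /u ler_weXn2l // ler1n.
Qed.

Lemma pos_ineq j : (j < k)%N ->
  b * Av (t ^+ (2 * j + 1)) ^+ 2 <= t ^+ (2 * j + 1) * Bv (t ^+ (2 * j + 1)) ^+ 2.
Proof.
move=> jk; set x := t ^+ (2 * j + 1).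
have x0 : 0 < x by apply: exprn_gt0; apply: t_gt0.
have h := Lo (ltnW jk) x0 (lexx _).
have A0 := Av_gt0 (ltW x0); have B0 := Bv_gt0 (ltW x0).
move: h A0 B0; set A := Av x; set B := Bv x => h A0 B0.
move: h; set T := t ^+ (k - j); set F := (2 : R) ^+ (k - j) => h.
have hx : x * T ^+ 2 = u * b.
  rewrite /x /T /b -exprM -exprD.
  have -> : (2 * j + 1 + (k - j) * 2 = (2 * k).+1)%N by lia.
  by rewrite exprS /t; ring.
have hF : F ^+ 2 <= u by apply: four_le; lia.
have T0 : 0 <= T by apply: exprn_ge0; apply: ltW; apply: t_gt0.
have F0 : 0 <= F by apply: exprn_ge0.
have h2 : (T * A) ^+ 2 <= (F * B) ^+ 2.
  by rewrite !expr2; apply: ler_pM => //; apply: mulr_ge0 => //; apply: ltW.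
have u0 := u_gt0.
have : u * (b * A ^+ 2) <= u * (x * B ^+ 2).
  rewrite mulrA -hx.
  have e1 : x * T ^+ 2 * A ^+ 2 = x * (T * A) ^+ 2 by ring.
  rewrite e1.
  apply: le_trans (_ : x * (F * B) ^+ 2 <= _).
    by apply: ler_wpM2l => //; apply: ltW.
  rewrite (_ : x * (F * B) ^+ 2 = F ^+ 2 * (x * B ^+ 2)); last by ring.
  apply: ler_wpM2r => //; apply: mulr_ge0; apply: ltW => //.
  by apply: exprn_gt0.
by rewrite ler_pM2l.
Qed.

Lemma neg_ineq j : (j <= k)%N ->
  t ^+ (2 * j) * Bv (t ^+ (2 * j)) ^+ 2 <= u * t ^+ (2 * k) * Av (t ^+ (2 * j)) ^+ 2.
Proof.
move=> jk; set x := t ^+ (2 * j).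
have x0 : 0 < x by apply: exprn_gt0; apply: t_gt0.
have h := Up jk (lexx x).
have A0 := Av_gt0 (ltW x0); have B0 := Bv_gt0 (ltW x0).
move: h A0 B0; set A := Av x; set B := Bv x => h A0 B0.
move: h; set T := t ^+ (k - j); set F := (2 : R) ^+ j => h.
have hx : x * T ^+ 2 = t ^+ (2 * k).
  rewrite /x /T -exprM -exprD; congr (t ^+ _); lia.
have hF : F ^+ 2 <= u by apply: four_le.
have T0 : 0 <= T by apply: exprn_ge0; apply: ltW; apply: t_gt0.
have F0 : 0 <= F by apply: exprn_ge0.
have h2 : B ^+ 2 <= (F * T * A) ^+ 2.
  by rewrite !expr2; apply: ler_pM => //; apply: ltW.
have e1 : x * (F * T * A) ^+ 2 = F ^+ 2 * (x * T ^+ 2) * A ^+ 2 by ring.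
apply: le_trans (_ : x * (F * T * A) ^+ 2 <= _).
  by apply: ler_wpM2l => //; apply: ltW.
rewrite e1 hx; apply: ler_wpM2r; first by apply: exprn_ge0; apply: ltW.
by apply: ler_wpM2r => //; apply: exprn_ge0; apply: ltW; apply: t_gt0.
Qed.

End Bounds.

Definition okL (R : realType) (P Q : {poly R}) (rho : seq R) (s : scheme) :=
  size rho = size s /\
  forall i, (i < size s)%N -> root_entry P Q (nth 0 rho i) (nth (Lp, 0%N) s i).

Lemma okL_nil (R : realType) (P Q : {poly R}) : okL P Q [::] [::].
Proof. by split. Qed.

Lemma okL_cat (R : realType) (P Q : {poly R}) r1 r2 s1 s2 :
  okL P Q r1 s1 -> okL P Q r2 s2 -> okL P Q (r1 ++ r2) (s1 ++ s2).
Proof.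
move=> [e1 h1] [e2 h2]; split; first by rewrite !size_cat e1 e2.
move=> i; rewrite size_cat !nth_cat e1 => lt.
case: ltnP => h; [exact: h1 | apply: h2; lia].
Qed.

Lemma okL_cons (R : realType) (P Q : {poly R}) x e r s :
  root_entry P Q x e -> okL P Q r s -> okL P Q (x :: r) (e :: s).
Proof.
move=> he ho; apply: (@okL_cat _ _ _ [:: x] r [:: e] s) => //.
by split => // -[|i] //.
Qed.

Lemma okL_map (R : realType) (P Q : {poly R}) n (g : nat -> R) (h : nat -> lbl * nat) :
  (forall m, (m < n)%N -> root_entry P Q (g m) (h m)) ->
  okL P Q (map g (iota 0 n)) (map h (iota 0 n)).
Proof.
move=> H; split; first by rewrite !size_map.
move=> i; rewrite size_map size_iota => lt.
by rewrite (nth_map 0%N) ?size_iota // (nth_map 0%N) ?size_iota // nth_iota // add0n; apply: H.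
Qed.

Lemma okL_nseq (R : realType) (P Q : {poly R}) (rs : seq R) e :
  (forall x, x \in rs -> root_entry P Q x e) -> okL P Q rs (nseq (size rs) e).
Proof.
move=> H; split; first by rewrite size_nseq.
by move=> i; rewrite size_nseq => lt; rewrite nth_nseq lt; apply: H; apply: mem_nth.
Qed.

Lemma srep2 (e1 e2 : lbl * nat) n :
  srep [:: e1; e2] n = map (fun m => if odd m then e2 else e1) (iota 0 (2 * n)).
Proof.
elim: n => [|n IH] //.
have -> : srep [:: e1; e2] n.+1 = e1 :: e2 :: srep [:: e1; e2] n by [].
rewrite IH (_ : (2 * n.+1 = (2 * n).+2)%N); last by lia.
rewrite /=; have -> : iota 2 (2 * n) = map (addn 2) (iota 0 (2 * n)) by rewrite -iotaDl.
rewrite -map_comp.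
by congr (_ :: _ :: _); apply: eq_map => m /=; rewrite add0n negbK.
Qed.

Lemma srep1 (e : lbl * nat) n : srep [:: e] n = nseq n e.
Proof.
elim: n => [|n IH] //.
by have -> : srep [:: e] n.+1 = e :: srep [:: e] n by []; rewrite IH.
Qed.

Lemma mupN (R : realType) (x : R) (p : {poly R}) : mup x (- p) = mup x p.
Proof. by rewrite -mulN1r mupMr // rootN root1. Qed.

Lemma root_sub (R : realType) (p q : {poly R}) x :
  root p x -> ~~ root q x -> ~~ root (p - q) x.
Proof. by rewrite /root hornerD hornerN => /eqP -> ; rewrite sub0r oppr_eq0. Qed.

Lemma root_sub' (R : realType) (p q : {poly R}) x :
  ~~ root p x -> root q x -> ~~ root (p - q) x.
Proof. by rewrite /root hornerD hornerN => ? /eqP ->; rewrite subr0. Qed.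

Section Poly.
Variables (R : realType) (k : nat) (preP preQ : seq R).
Hypothesis hpre : forall y, y \in preP ++ preQ -> - t R k < y.

Local Notation T := (t R k).
Definition sA := [seq - a R k i | i <- iota 0 k].
Definition sB := [seq - c R k i | i <- iota 0 k].
Definition PP := \prod_(y <- preP ++ sA ++ sA) ('X - y%:P).
Definition QQ := - \prod_(y <- preQ ++ sB ++ sB) ('X - y%:P).
Definition LL := [seq - T ^+ (2 * k - m) | m <- iota 0 (2 * k)].

Lemma tX_inj m n : T ^+ m = T ^+ n -> m = n.
Proof.
case: (ltngtP m n) => // h; move/tX_lt: h => /(_ R k) h e; by rewrite e ltxx in h.
Qed.

Lemma mem_sA x : x \in sA -> x <= - T.
Proof. by case/mapP => i _ ->; rewrite lerN2 a_ge_t. Qed.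

Lemma mem_sB x : x \in sB -> x <= - T.
Proof. by case/mapP => i _ ->; rewrite lerN2 (le_trans (a_ge_t _ _ i)) // a_le_c. Qed.

Lemma notin_pre x : x <= - T -> (x \notin preP) && (x \notin preQ).
Proof.
move=> xle; apply/andP; split; apply/negP => hx;
  have := hpre (y := x); rewrite mem_cat hx ?orbT => /(_ isT); by rewrite ltNge xle.
Qed.

Lemma uniq_sA : uniq sA.
Proof.
rewrite map_inj_uniq ?iota_uniq // => i j /eqP; rewrite eqr_opp => /eqP /tX_inj; lia.
Qed.

Lemma uniq_sB : uniq sB.
Proof.
rewrite map_inj_uniq ?iota_uniq // => i j /eqP; rewrite eqr_opp => /eqP /tX_inj; lia.
Qed.

Lemma sA_sB x : x \in sA -> x \in sB -> False.
Proof.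
by case/mapP => i _ -> /mapP [j _] /eqP; rewrite eqr_opp => /eqP /tX_inj; lia.
Qed.

Lemma rootPP x : root PP x = (x \in preP) || (x \in sA).
Proof. by rewrite /PP root_prod_XsubC !mem_cat orbb. Qed.

Lemma rootQQ x : root QQ x = (x \in preQ) || (x \in sB).
Proof. by rewrite /QQ rootN root_prod_XsubC !mem_cat orbb. Qed.

Lemma mupPP x : mup x PP = (count_mem x preP + 2 * count_mem x sA)%N.
Proof. by rewrite /PP mu_prod_XsubC !count_cat; lia. Qed.

Lemma mupQQ x : mup x QQ = (count_mem x preQ + 2 * count_mem x sB)%N.
Proof. by rewrite /QQ mupN mu_prod_XsubC !count_cat; lia. Qed.

Lemma entry_A x : x \in sA -> root_entry PP QQ x (Lp, 2%N).
Proof.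
move=> hx; have /notin_pre /andP [nP nQ] := mem_sA hx.
have rP : root PP x by rewrite rootPP hx orbT.
have nrQ : ~~ root QQ x.
  by rewrite rootQQ negb_or nQ /=; apply/negP => /(sA_sB hx).
split => //; first exact: root_sub.
by rewrite mupPP (count_uniq_mem _ uniq_sA) hx (count_memPn nP).
Qed.

Lemma entry_B x : x \in sB -> root_entry PP QQ x (Lq, 2%N).
Proof.
move=> hx; have /notin_pre /andP [nP nQ] := mem_sB hx.
have rQ : root QQ x by rewrite rootQQ hx orbT.
have nrP : ~~ root PP x.
  by rewrite rootPP negb_or nP /=; apply/negP => /sA_sB /(_ hx).
split => //; first exact: root_sub'.
by rewrite mupQQ (count_uniq_mem _ uniq_sB) hx (count_memPn nQ).
Qed.

Lemma LL_elem m : (m < 2 * k)%N ->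
  if odd m then - T ^+ (2 * k - m) \in sA else - T ^+ (2 * k - m) \in sB.
Proof.
move=> mk; have He := odd_double_half (2 * k - m).
have Ho : odd (2 * k - m) = odd m by rewrite oddB ?oddM //=; lia.
case: ifP => om; rewrite om in Ho.
  apply/mapP; exists ((2 * k - m)./2); first by rewrite mem_iota; rewrite Ho in He; lia.
  by rewrite /a; congr (- T ^+ _); rewrite Ho in He; lia.
apply/mapP; exists ((2 * k - m)./2).-1; first by rewrite mem_iota; rewrite Ho in He; lia.
by rewrite /c; congr (- T ^+ _); rewrite Ho in He; lia.
Qed.

Lemma okLL : okL PP QQ LL (srep [:: (Lq, 2%N); (Lp, 2%N)] k).
Proof.
rewrite srep2 /LL; apply: okL_map => m mk.
have := LL_elem mk; case: ifP => _; [exact: entry_A | exact: entry_B].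
Qed.

Lemma mem_LL x : (x \in LL) = (x \in sA) || (x \in sB).
Proof.
apply/idP/idP.
  case/mapP => m; rewrite mem_iota /= => mk ->.
  by have := LL_elem mk; case: ifP => _ ->; rewrite ?orbT.
case/orP => /mapP [i]; rewrite mem_iota /= => ik ->; apply/mapP.
  by exists (2 * k - (2 * i + 1))%N; [rewrite mem_iota; lia | rewrite /a; congr (- T ^+ _); lia].
by exists (2 * k - (2 * i + 2))%N; [rewrite mem_iota; lia | rewrite /c; congr (- T ^+ _); lia].
Qed.

Lemma LL_le x : x \in LL -> x <= - T.
Proof. by rewrite mem_LL => /orP [/mem_sA | /mem_sB]. Qed.

Lemma sorted_LL : sorted <%R LL.
Proof.
apply/(sortedP 0) => i; rewrite size_map size_iota => hi.
rewrite !(nth_map 0%N) ?size_iota ?nth_iota //; try lia.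
by rewrite ltrN2 tX_lt //; lia.
Qed.

Lemma PPE x : PP.[x] = \prod_(y <- preP) (x - y) * Av k x ^+ 2.
Proof.
rewrite /PP horner_prod !big_cat /= expr2 /Av big_map; congr (_ * (_ * _));
  by apply: eq_bigr => i _; rewrite hornerXsubC ?opprK.
Qed.

Lemma QQE x : QQ.[x] = - (\prod_(y <- preQ) (x - y) * Bv k x ^+ 2).
Proof.
rewrite /QQ hornerN horner_prod !big_cat /= expr2 /Bv big_map; congr (- (_ * (_ * _)));
  by apply: eq_bigr => i _; rewrite hornerXsubC ?opprK.
Qed.


Lemma entry_P y : y \in preP -> y \notin preQ -> - T < y ->
  root_entry PP QQ y (Lp, count_mem y preP).
Proof.
move=> yP nyQ yt.
have nA : y \notin sA by apply/negP => /mem_sA; rewrite leNgt yt.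
have nB : y \notin sB by apply/negP => /mem_sB; rewrite leNgt yt.
have rP : root PP y by rewrite rootPP yP.
have nrQ : ~~ root QQ y by rewrite rootQQ negb_or nyQ nB.
split => //; first exact: root_sub.
by rewrite mupPP (count_memPn nA) muln0 addn0.
Qed.

Lemma entry_Q y : y \in preQ -> y \notin preP -> - T < y ->
  root_entry PP QQ y (Lq, count_mem y preQ).
Proof.
move=> yQ nyP yt.
have nA : y \notin sA by apply/negP => /mem_sA; rewrite leNgt yt.
have nB : y \notin sB by apply/negP => /mem_sB; rewrite leNgt yt.
have rQ : root QQ y by rewrite rootQQ yQ.
have nrP : ~~ root PP y by rewrite rootPP negb_or nyP nA.
split => //; first exact: root_sub'.
by rewrite mupQQ (count_memPn nB) muln0 addn0.
Qed.

Lemma realize_gen (b0 : R) (mid : seq R) (smid : scheme) (rs : seq R) :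
  0 < b0 ->
  (forall x, (x \in preP) || (x \in preQ) = (x \in mid) || (x == b0)) ->
  (forall x, x \in mid -> - T < x <= 0) ->
  sorted <%R mid ->
  okL PP QQ mid smid ->
  root_entry PP QQ b0 (Lp, 1%N) ->
  size (PP - QQ) = (size rs).+1 ->
  (forall r, r \in rs -> 0 < r < b0 /\ root (PP - QQ) r) ->
  sorted <%R rs ->
  realizes (srep [:: (Lq, 2%N); (Lp, 2%N)] k ++ smid ++ srep [:: (Lr, 1%N)] (size rs)
             ++ [:: (Lp, 1%N)]) (size rs) PP QQ.
Proof.
move=> b0p hpm hmid smid_s okmid eb hsize hrs srs.
split => //.
have urs : uniq rs by apply: sorted_uniq srs; [exact: lt_trans | exact: ltxx].
have allr : all (root (PP - QQ)) rs by apply/allP => r /hrs [].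
have urs' : poly.uniq_roots rs by rewrite poly.uniq_rootsE.
have hf := all_roots_prod_XsubC hsize allr urs'.
have lc0 : lead_coef (PP - QQ) != 0 by rewrite lead_coef_eq0 -size_poly_eq0 hsize.
have rootf x : root (PP - QQ) x = (x \in rs).
  by rewrite hf rootZ // root_prod_XsubC.
have mupf r : r \in rs -> mup r (PP - QQ) = 1%N.
  move=> rr; rewrite hf -mul_polyC mupMr ?rootC // mu_prod_XsubC.
  by rewrite count_uniq_mem // rr.
have okrs : okL PP QQ rs (srep [:: (Lr, 1%N)] (size rs)).
  rewrite srep1; apply: okL_nseq => r rr.
  have [/andP [r0 rb] rf] := hrs r rr.
  have nA : r \notin sA by apply/negP => /mem_sA; have := t_gt0 R k; lra.
  have nB : r \notin sB by apply/negP => /mem_sB; have := t_gt0 R k; lra.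
  have npq : ~~ ((r \in preP) || (r \in preQ)).
    rewrite hpm negb_or; apply/andP; split.
      by apply/negP => /hmid /andP [_]; rewrite leNgt r0.
    by apply/negP => /eqP E; rewrite E ltxx in rb.
  move: npq; rewrite negb_or => /andP [nP nQ].
  split => //; [by rewrite rootPP negb_or nP | by rewrite rootQQ negb_or nQ | exact: mupf].
have okall := okL_cat okLL (okL_cat okmid (okL_cat okrs (okL_cons eb (okL_nil PP QQ)))).
exists (LL ++ mid ++ rs ++ [:: b0]); split; last first.
- exact: okall.2.
- move=> x.
  have e : root PP x || root QQ x = [|| x \in sA, x \in sB, x \in mid | x == b0].
    rewrite rootPP rootQQ; move: (hpm x).
    case: (x \in preP); case: (x \in preQ); case: (x \in sA); case: (x \in sB);
      case: (x \in mid); case: (x == b0) => //.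
  rewrite e rootf !mem_cat mem_LL inE.
  case: (x \in sA); case: (x \in sB); case: (x \in mid); case: (x == b0);
    case: (x \in rs) => //.
- exact: okall.1.
rewrite sorted_pairwise; last exact: lt_trans.
have pw s : sorted <%R s -> pairwise <%R s.
  by rewrite sorted_pairwise //; exact: lt_trans.
have tp := t_gt0 R k.
rewrite !pairwise_cat pw ?sorted_LL // pw // pw // /= andbT.
apply/and3P; split.
- apply/allrelP => x y /LL_le xl; rewrite !mem_cat inE => /or3P [/hmid | /hrs [] | /eqP ->].
  + by case/andP => yl _; lra.
  + by case/andP => y0 _ _; lra.
  + lra.
- apply/allrelP => x y /hmid /andP [_ x0]; rewrite mem_cat inE => /orP [/hrs [] | /eqP ->].
  + by case/andP => y0 _ _; lra.
  + lra.
- apply/allrelP => x y /hrs [/andP [_ xb] _]; rewrite inE => /eqP ->; done.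
Qed.
End Poly.

Lemma ivt_chain (R : realType) (f : {poly R}) (x : nat -> R) n :
  (forall j, (j < n)%N -> x j < x j.+1 /\ f.[x j] * f.[x j.+1] < 0) ->
  exists rs : seq R, size rs = n /\
    forall j, (j < n)%N -> x j < nth 0 rs j < x j.+1 /\ root f (nth 0 rs j).
Proof.
elim: n => [|n IH] H; first by exists [::].
have [|rs [srs hrs]] := IH; first by move=> j jn; apply: H; lia.
have [xlt sg] := H n (ltnSn n).
have [r] := poly_ivtoo (ltW xlt) sg; rewrite in_itv /= => rin rr.
exists (rcons rs r); split; first by rewrite size_rcons srs.
move=> j jn; rewrite nth_rcons srs.
case: ltnP => [jl|jg]; first exact: hrs.
have -> : j = n by lia.
by rewrite eqxx.
Qed.

Lemma chain_sorted (R : realType) (x : nat -> R) (rs : seq R) n :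
  size rs = n -> (forall j, (j < n)%N -> x j < nth 0 rs j < x j.+1) -> sorted <%R rs.
Proof.
move=> srs h; apply/(sortedP 0) => j; rewrite srs => jn.
have /andP [_ h1] := h j (ltnW jn); have /andP [h2 _] := h j.+1 jn.
exact: lt_trans h1 h2.
Qed.

Lemma size_add_monic (R : realType) (p q : {poly R}) n :
  p \is monic -> q \is monic -> size p = n.+1 -> size q = n.+1 -> size (p + q) = n.+1.
Proof.
move=> mp mq sp sq; apply/anti_leq/andP; split.
  by apply: leq_trans (size_polyD _ _) _; rewrite sp sq maxnn.
have c : (p + q)`_n = 2.
  rewrite coefD; move: (monicP mp) (monicP mq); rewrite !lead_coefE sp sq /= => -> ->.
  done.
rewrite ltnNge; apply/negP => hle.
by move: c; rewrite nth_default //; move/eqP; rewrite eq_sym pnatr_eq0.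
Qed.

Lemma basic_facts (R : realType) k :
  [/\ 0 < t R k, 1 <= u R k, 1 <= t R k ^+ (2 * k),
      u R k * t R k ^+ (2 * k) >= t R k ^+ (2 * k) & b R k = 6 * (u R k * t R k ^+ (2 * k))].
Proof.
have t0 := t_gt0 R k; have u1 := u_ge1 R k; have W1 := tX_ge1 R k (2 * k).
split => //; last by rewrite /b mulrA.
by rewrite -{1}(mul1r (t R k ^+ _)) ler_wpM2r // ltW // (lt_le_trans ltr01 W1).
Qed.

Lemma even_case (R : realType) k : (0 < k)%N -> realizable R (scheme_even k) (2 * k + 1).
Proof.
move=> k0.
have [t0 u1 W1 uW bE] := basic_facts R k.
set T := t R k in t0 W1 uW bE *; set W := T ^+ (2 * k) in W1 uW bE *.
set U := u R k in u1 uW bE *; set B0 := b R k in bE *.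
have B0p : 0 < B0 by lra.
pose preP := [:: B0]; pose preQ := [:: (0 : R)].
have hpre : forall y, y \in preP ++ preQ -> - T < y.
  by move=> y; rewrite !inE => /orP [/eqP -> | /eqP ->]; lra.
set P := PP k preP; set Q := QQ k preQ.
have hf x : (P - Q).[x] = (x - B0) * Av k x ^+ 2 + x * Bv k x ^+ 2.
  by rewrite hornerD hornerN PPE QQE !big_cons !big_nil; ring.
have hsize : size (P - Q) = (2 * k + 1).+1.
  rewrite /Q /QQ opprK; apply: size_add_monic; rewrite ?monic_prod_XsubC //.
    by rewrite size_prod_XsubC !size_cat /= !size_map size_iota; lia.
  by rewrite size_prod_XsubC !size_cat /= !size_map size_iota; lia.
pose xe j := if j == 0%N then 0 else if (j <= 2 * k)%N then T ^+ j else B0.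
have xe_b j : 0 <= xe j <= B0.
  rewrite /xe; case: eqP => _; first lra.
  case: ifP => jk; last lra.
  have : T ^+ j <= W by rewrite /W tX_le.
  have := tX_ge1 R k j; rewrite -/T; lra.
have sgn j : (j <= 2 * k + 1)%N ->
    if odd j then 0 < (P - Q).[xe j] else (P - Q).[xe j] < 0.
  move=> jk; rewrite hf /xe.
  have He := odd_double_half j.
  case: eqP => [->|j0] /=.
    rewrite mul0r addr0; have := Av_gt0 k (lexx (0 : R)); set A := Av k 0 => A0.
    have : 0 < A ^+ 2 by apply: exprn_gt0.
    by move=> h; have := mulr_gt0 B0p h; lra.
  case: (leqP j (2 * k)) => jk' /=; last first.
    have -> : j = (2 * k + 1)%N by lia.
    have -> : odd (2 * k + 1) by rewrite addn1 /= oddM.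
    have : 0 < Bv k B0 ^+ 2 by apply: exprn_gt0; apply: Bv_gt0; lra.
    by rewrite subrr mul0r add0r => h; apply: mulr_gt0 => //; lra.
  case: ifP => oj.
    set i := j./2; have -> : j = (2 * i + 1)%N by rewrite oj in He; lia.
    have ik : (i < k)%N by rewrite oj in He; lia.
    have hp := pos_ineq R ik.
    set x := T ^+ (2 * i + 1) in hp *.
    have x0 : 0 < x by apply: exprn_gt0.
    have A0 : 0 < Av k x ^+ 2 by apply: exprn_gt0; apply: Av_gt0; lra.
    have := mulr_gt0 x0 A0; move: hp; rewrite -/B0; nra.
  set i := j./2; have -> : j = (2 * i)%N by rewrite oj in He; lia.
  have ik : (i <= k)%N by rewrite oj in He; lia.
  have hn := neg_ineq R ik.
  have xW : T ^+ (2 * i) <= W by rewrite /W tX_le //; lia.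
  move: hn xW; rewrite -/T -/U -/W; set x := T ^+ (2 * i) => hn xW.
  have A0 : 0 < Av k x ^+ 2 by apply: exprn_gt0; apply: Av_gt0; apply: ltW; apply: exprn_gt0.
  have : 0 < (B0 - x - U * W) * Av k x ^+ 2 by apply: mulr_gt0 => //; lra.
  nra.
have mono j : (j < 2 * k + 1)%N -> xe j < xe j.+1.
  move=> jn; rewrite /xe /=.
  case: eqP => [->|j0] /=.
    have -> : (1 <= 2 * k)%N by lia.
    by rewrite expr1.
  case: (leqP j.+1 (2 * k)) => h1.
    by rewrite (ltnW h1) tX_lt.
  have -> : (j <= 2 * k)%N by lia.
  have -> : j = (2 * k)%N by lia.
  rewrite -/W; lra.
have [|rs [srs hrs]] := @ivt_chain R (P - Q) xe (2 * k + 1).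
  move=> j jn; split; first exact: mono.
  have := sgn j (ltnW jn); have := sgn j.+1 jn; rewrite /=.
  by case: (odd j) => /= h1 h2; nra.
have rs_sorted : sorted <%R rs.
  by apply: (chain_sorted (x := xe)) srs _ => j /hrs [].
have hrs' : forall r, r \in rs -> 0 < r < B0 /\ root (P - Q) r.
  move=> r /(nthP 0) [j]; rewrite srs => jn <-.
  have [/andP [h1 h2] hr] := hrs j jn.
  have := xe_b j; have := xe_b j.+1; move=> /andP [_ h3] /andP [h4 _].
  by split => //; apply/andP; split; lra.
exists P, Q.
have := @realize_gen R k preP preQ hpre B0 [:: 0] [:: (Lq, 1%N)] rs B0p.
rewrite srs /scheme_even; apply.
- by move=> x; rewrite !inE orbC.
- by move=> x; rewrite inE => /eqP ->; apply/andP; split; have := t_gt0 R k; lra.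
- by [].
- apply: okL_cons; last exact: okL_nil.
  have := @entry_Q R k preP preQ 0; rewrite /= eqxx; apply => //.
    by rewrite inE.
  by rewrite inE; apply/negP => /eqP h; move: B0p; rewrite -h ltxx.
  have := t_gt0 R k; lra.
- have := @entry_P R k preP preQ B0; rewrite /= eqxx; apply => //.
    by rewrite inE.
  by rewrite inE; apply/negP => /eqP h; move: B0p; rewrite h ltxx.
  have := t_gt0 R k; lra.
- exact: hsize.
- exact: hrs'.
- exact: rs_sorted.
Qed.

Lemma odd_case (R : realType) k : realizable R (scheme_odd k) (2 * k + 2).
Proof.
have [t0 u1 W1 uW bE] := basic_facts R k.
have t1 := t_gt1 R k.
set T := t R k in t0 t1 W1 uW bE *; set W := T ^+ (2 * k) in W1 uW bE *.
set U := u R k in u1 uW bE *; set B0 := b R k in bE *.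
have B0p : 0 < B0 by lra.
pose preP := [:: 0; B0]; pose preQ := [:: (-1 : R); -1].
have hpre : forall y, y \in preP ++ preQ -> - T < y.
  by move=> y; rewrite !inE => /or4P [] /eqP ->; lra.
set P := PP k preP; set Q := QQ k preQ.
have hf x : (P - Q).[x] = x * (x - B0) * Av k x ^+ 2 + (x + 1) ^+ 2 * Bv k x ^+ 2.
  by rewrite hornerD hornerN PPE QQE !big_cons !big_nil; ring.
have hsize : size (P - Q) = (2 * k + 2).+1.
  rewrite /Q /QQ opprK; apply: size_add_monic; rewrite ?monic_prod_XsubC //.
    by rewrite size_prod_XsubC !size_cat /= !size_map size_iota; lia.
  by rewrite size_prod_XsubC !size_cat /= !size_map size_iota; lia.
pose xo j := if j == 0%N then 0 else if (j <= 2 * k + 1)%N then T ^+ j.-1 else B0.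
have xo_b j : 0 <= xo j <= B0.
  rewrite /xo; case: eqP => _; first lra.
  case: ifP => jk; last lra.
  have : T ^+ j.-1 <= W by rewrite /W tX_le //; lia.
  have := tX_ge1 R k j.-1; rewrite -/T; lra.
have sgn j : (j <= 2 * k + 2)%N ->
    if odd j then (P - Q).[xo j] < 0 else 0 < (P - Q).[xo j].
  move=> jk; rewrite hf /xo.
  have He := odd_double_half j.
  case: eqP => [->|j0] /=.
    rewrite mul0r mul0r add0r add0r expr1n mul1r.
    by apply: exprn_gt0; apply: Bv_gt0.
  case: (leqP j (2 * k + 1)) => jk' /=; last first.
    have -> : j = (2 * k + 2)%N by lia.
    have -> : odd (2 * k + 2) = false by rewrite !addnS addn0 /= negbK oddM.
    have : 0 < Bv k B0 ^+ 2 by apply: exprn_gt0; apply: Bv_gt0; lra.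
    rewrite subrr mulr0 mul0r add0r => h; apply: mulr_gt0 => //.
    by apply: exprn_gt0; lra.
  case: ifP => oj.
    set i := j./2; have -> : j.-1 = (2 * i)%N by rewrite oj in He; lia.
    have ik : (i <= k)%N by rewrite oj in He; lia.
    have hn := neg_ineq R ik.
    have xW : T ^+ (2 * i) <= W by rewrite /W tX_le //; lia.
    have x1 := tX_ge1 R k (2 * i).
    move: hn xW x1; rewrite -/T -/U -/W; set x := T ^+ (2 * i) => hn xW x1.
    have A0 : 0 < Av k x ^+ 2 by apply: exprn_gt0; apply: Av_gt0; lra.
    have B20 : 0 <= Bv k x ^+ 2 by apply: exprn_ge0; apply: ltW; apply: Bv_gt0; lra.
    move: hn A0 B20; set A2 := Av k x ^+ 2; set B2 := Bv k x ^+ 2 => hn A0 B20.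
    have e1 : (x + 1) ^+ 2 <= 4 * x ^+ 2 by nra.
    have e2 : (x + 1) ^+ 2 * B2 <= 4 * x ^+ 2 * B2 by apply: ler_wpM2r.
    have e3 : x * (x * B2) <= x * (U * W * A2) by apply: ler_wpM2l => //; lra.
    have e4 : 0 < x * ((B0 - x - 4 * (U * W)) * A2).
      by apply: mulr_gt0; [lra | apply: mulr_gt0 => //; lra].
    nra.
  set i := (j./2).-1; have -> : j.-1 = (2 * i + 1)%N by rewrite oj in He; lia.
  have ik : (i < k)%N by rewrite oj in He; lia.
  have hp := pos_ineq R ik.
  have x1 := tX_ge1 R k (2 * i + 1).
  move: hp x1; rewrite -/T -/B0; set x := T ^+ (2 * i + 1) => hp x1.
  have A0 : 0 < Av k x ^+ 2 by apply: exprn_gt0; apply: Av_gt0; lra.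
  have B20 : 0 <= Bv k x ^+ 2 by apply: exprn_ge0; apply: ltW; apply: Bv_gt0; lra.
  move: hp A0 B20; set A2 := Av k x ^+ 2; set B2 := Bv k x ^+ 2 => hp A0 B20.
  have e1 : x ^+ 2 * B2 <= (x + 1) ^+ 2 * B2 by apply: ler_wpM2r => //; nra.
  have e3 : x * (B0 * A2) <= x * (x * B2) by apply: ler_wpM2l => //; lra.
  have e4 : 0 < x * (x * A2) by apply: mulr_gt0; [lra | apply: mulr_gt0 => //; lra].
  nra.
have mono j : (j < 2 * k + 2)%N -> xo j < xo j.+1.
  move=> jn; rewrite /xo /=.
  case: eqP => [->|j0] /=.
    have -> : (1 <= 2 * k + 1)%N by lia.
    by rewrite expr0.
  case: (leqP j.+1 (2 * k + 1)) => h1.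
    rewrite (ltnW h1) tX_lt //; lia.
  have -> : (j <= 2 * k + 1)%N by lia.
  have -> : j = (2 * k + 1)%N by lia.
  rewrite addn1 /= -/W; lra.
have [|rs [srs hrs]] := @ivt_chain R (P - Q) xo (2 * k + 2).
  move=> j jn; split; first exact: mono.
  have := sgn j (ltnW jn); have := sgn j.+1 jn; rewrite /=.
  by case: (odd j) => /= h1 h2; nra.
have rs_sorted : sorted <%R rs.
  by apply: (chain_sorted (x := xo)) srs _ => j /hrs [].
have hrs' : forall r, r \in rs -> 0 < r < B0 /\ root (P - Q) r.
  move=> r /(nthP 0) [j]; rewrite srs => jn <-.
  have [/andP [h1 h2] hr] := hrs j jn.
  have := xo_b j; have := xo_b j.+1; move=> /andP [_ h3] /andP [h4 _].
  by split => //; apply/andP; split; lra.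
have B0n : (B0 == 0) = false by apply: gt_eqF.
exists P, Q.
have := @realize_gen R k preP preQ hpre B0 [:: -1; 0] [:: (Lq, 2%N); (Lp, 1%N)] rs B0p.
rewrite srs /scheme_odd; apply.
- move=> x; rewrite !inE.
  by case: (x == 0); case: (x == B0); case: (x == -1).
- move=> x; rewrite !inE => /orP [] /eqP ->; apply/andP; split; have := t_gt1 R k; lra.
- by rewrite /= andbT; lra.
- apply: okL_cons.
    have := @entry_Q R k preP preQ (-1); rewrite /= eqxx; apply => //.
      by rewrite inE eqxx.
    rewrite !inE negb_or; apply/andP; split; apply/negP => /eqP h; lra.
    have := t_gt1 R k; lra.
  apply: okL_cons; last exact: okL_nil.
  have := @entry_P R k preP preQ 0; rewrite /= eqxx B0n; apply => //.
    by rewrite inE eqxx.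
  by rewrite !inE negb_or; apply/andP; split; apply/negP => /eqP h; lra.
  have := t_gt0 R k; lra.
- have := @entry_P R k preP preQ B0; rewrite /= eqxx [0 == B0]eq_sym B0n; apply => //.
    by rewrite !inE eqxx orbT.
  by rewrite !inE negb_or; apply/andP; split; apply/negP => /eqP h; lra.
  have := t_gt0 R k; lra.
- exact: hsize.
- exact: hrs'.
- exact: rs_sorted.
Qed.

Close Scope ring_scope.

Theorem proposition3p2 (R : realType) :
  (forall k : nat, (0 < k)%N -> realizable R (scheme_even k) (2 * k + 1)) /\
  (forall k : nat, realizable R (scheme_odd k) (2 * k + 2)).
Proof.
split; [exact: even_case | exact: odd_case].
Qed.
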